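(* Let $k\ge 1$, $n\ge 100k$ and $3\le r<s\le 10k$ be integers. Then \[ \lambda(T_{n-s+2,2}\circ K_{s-1})<\lambda(T_{n-r+2,2}\circ K_{r-1}). \]
   Context: $\lambda(G)$ denotes the spectral radius of the adjacency matrix of $G$. $T_{m,2}$ denotes the complete bipartite graph on $m$ vertices with parts of sizes $\lfloor m/2\rfloor$ and $\lceil m/2\rceil$. For $t\ge 3$, $T_{n-t+2,2}\circ K_{t-1}$ is the $n$-vertex graph obtained by identifying a vertex of the complete graph $K_{t-1}$ with a vertex of the smaller part (of size $\lfloor (n-t+2)/2\rfloor$) of $T_{n-t+2,2}$. *)

(* Defs.v *)
From mathcomp Require Import all_boot all_order all_algebra all_field.
Set Implicit Arguments. Unset Strict Implicit. Unset Printing Implicit Defensive.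
Import Order.TTheory GRing.Theory Num.Theory.
Local Open Scope ring_scope.

(* Spectral radius of a square complex (algebraic) matrix: the maximum modulus
   of the roots (with multiplicity) of its characteristic polynomial, i.e. of
   its eigenvalues. *)
Definition eigen_seq (n : nat) (A : 'M[algC]_n) : seq algC :=
  sval (closed_field_poly_normal (char_poly A)).

Definition spectral_radius (n : nat) (A : 'M[algC]_n) : algC :=
  \big[Num.max/0]_(z <- eigen_seq A) `|z|.

(* The graph T_{n-t+2,2} o K_{t-1} on vertex set 'I_n (for 2 <= t <= n).
   Vertices 0..a-1 : smaller part of T_{m,2};  a..m-1 : larger part;
   the clique K_{t-1} has vertex set {0} U {m, ..., n-1} (vertex 0 is the
   identified vertex, lying in the smaller part). *)
Definition tk_adj (n t : nat) (i j : 'I_n) : bool :=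
  let m := (n - t + 2)%N in
  let a := (m %/ 2)%N in
  [&& (i < m)%N, (j < m)%N & ((i < a)%N != (j < a)%N)]
  || [&& i != j, ((i == 0 :> nat) || (m <= i)%N) & ((j == 0 :> nat) || (m <= j)%N)].

Definition tk_adjmx (n t : nat) : 'M[algC]_n :=
  \matrix_(i, j) (tk_adj t i j)%:R.

(* Main.v *)
Require Import Defs.
From mathcomp Require Import all_boot all_order all_algebra all_field.
From mathcomp Require Import zify ring lra.
Import Order.TTheory GRing.Theory Num.Theory.
Local Open Scope ring_scope.

Definition adjN (n t i j : nat) : bool :=
  let m := (n - t + 2)%N in
  let a := (m %/ 2)%N in
  [&& (i < m)%N, (j < m)%N & ((i < a)%N != (j < a)%N)]
  || [&& i != j, ((i == 0) || (m <= i)%N) & ((j == 0) || (m <= j)%N)].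

Lemma tk_adjE n t (i j : 'I_n) : tk_adjmx n t i j = (adjN n t i j)%:R.
Proof. by rewrite mxE. Qed.

Lemma sum_seg (G : nat -> algC) lo hi x :
  (forall j, (lo <= j < hi)%N -> G j = x) -> \sum_(lo <= j < hi) G j = x *+ (hi - lo).
Proof. by move=> H; rewrite -sumr_const_nat; apply: eq_big_nat. Qed.

Definition Fv (n t : nat) (x0 xa xb xc : algC) (i : nat) : algC :=
  if i == 0%N then x0 else if (i < (n - t + 2) %/ 2)%N then xa
  else if (i < n - t + 2)%N then xb else xc.

Definition RS (n t : nat) (x0 xa xb xc : algC) (j : nat) : algC :=
  let m := (n - t + 2)%N in let a := (m %/ 2)%N in
  if j == 0%N then xb *+ (m - a) + xc *+ (n - m)
  else if (j < a)%N then xb *+ (m - a)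
  else if (j < m)%N then x0 + xa *+ (a - 1)
  else x0 + xc *+ (n - m - 1).

Ltac seg := move=> i /andP[Hi1 Hi2]; rewrite /Fv;
  case: eqP => E0; (try case: ltnP => E1); (try case: ltnP => E2);
  case: (boolP (adjN _ _ _ _)) => Hadj; rewrite ?mulr1 ?mulr0 //;
  exfalso; match goal with H : is_true (~~ adjN _ _ _ _) |- _ => rewrite /adjN in H
   | H : is_true (adjN _ _ _ _) |- _ => rewrite /adjN in H end; lia.

Lemma row_sum n t x0 xa xb xc (j : nat) :
  (3 <= t)%N -> (t <= n)%N -> (4 <= n - t + 2)%N -> (j < n)%N ->
  \sum_(i < n) Fv n t x0 xa xb xc i * (adjN n t i j)%:R = RS n t x0 xa xb xc j.
Proof.
move=> Ht Htn Hm Hj.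
rewrite -(big_mkord xpredT (fun i => Fv n t x0 xa xb xc i * (adjN n t i j)%:R)).
set a := ((n - t + 2) %/ 2)%N; set m := (n - t + 2)%N.
have Ha : (1 <= a)%N by rewrite /a; lia.
rewrite big_ltn; last lia.
rewrite (@big_cat_nat _ _ _ a) /=; [|lia|lia].
rewrite (@big_cat_nat _ _ _ m a n) /=; [|lia|lia].
rewrite /RS -/a -/m.
case: eqP => Ej0.
- rewrite (@sum_seg _ 1 a 0); last by seg.
  rewrite (@sum_seg _ a m xb); last by seg.
  rewrite (@sum_seg _ m n xc); last by seg.
  have -> : Fv n t x0 xa xb xc 0 * (adjN n t 0 j)%:R = 0.
    have -> : adjN n t 0 j = false by apply/negbTE; rewrite /adjN; lia.
    by rewrite mulr0.
  by rewrite mul0rn !add0r.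
case: ltnP => Eja.
- rewrite (@sum_seg _ 1 a 0); last by seg.
  rewrite (@sum_seg _ a m xb); last by seg.
  rewrite (@sum_seg _ m n 0); last by seg.
  have -> : Fv n t x0 xa xb xc 0 * (adjN n t 0 j)%:R = 0.
    have -> : adjN n t 0 j = false by apply/negbTE; rewrite /adjN; lia.
    by rewrite mulr0.
  by rewrite !mul0rn !add0r addr0.
case: ltnP => Ejm.
- rewrite (@sum_seg _ 1 a xa); last by seg.
  rewrite (@sum_seg _ a m 0); last by seg.
  rewrite (@sum_seg _ m n 0); last by seg.
  have -> : Fv n t x0 xa xb xc 0 * (adjN n t 0 j)%:R = x0.
    have -> : adjN n t 0 j = true by apply/idP; rewrite /adjN; lia.
    by rewrite mulr1.
  by rewrite !mul0rn !addr0.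
rewrite (@sum_seg _ 1 a 0); last by seg.
rewrite (@sum_seg _ a m 0); last by seg.
rewrite (@big_cat_nat _ _ _ j m n) /=; [|lia|lia].
rewrite (@sum_seg _ m j xc); last by seg.
rewrite big_ltn; last lia.
rewrite (@sum_seg _ j.+1 n xc); last by seg.
have -> : Fv n t x0 xa xb xc 0 * (adjN n t 0 j)%:R = x0.
  have -> : adjN n t 0 j = true by apply/idP; rewrite /adjN; lia.
  by rewrite mulr1.
have -> : Fv n t x0 xa xb xc j * (adjN n t j j)%:R = 0.
  have -> : adjN n t j j = false by apply/negbTE; rewrite /adjN; lia.
  by rewrite mulr0.
rewrite !mul0rn !add0r -mulrnDr.
congr (_ + _ *+ _); lia.
Qed.

Lemma seq_argmax (T : eqType) (f : T -> algC) (s : seq T) :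
  (forall x, f x \is Num.real) -> s != [::] ->
  exists2 x, x \in s & forall y, y \in s -> f y <= f x.
Proof.
move=> Hr; elim: s => [//|x s IH] _.
case: (eqVneq s [::]) => [->|Hs].
  by exists x; rewrite ?mem_head // => y; rewrite inE => /eqP ->.
have [y Hy Hmax] := IH Hs.
case: (real_leP (Hr x) (Hr y)) => Hxy.
- exists y; first by rewrite inE Hy orbT.
  move=> z; rewrite inE => /orP[/eqP ->|]; [done| exact: Hmax].
- exists x; first by rewrite mem_head.
  move=> z; rewrite inE => /orP[/eqP ->|/Hmax Hz]; first by [].
  exact: (le_trans Hz (ltW Hxy)).
Qed.

Lemma collatz n (A : 'M[algC]_n) (w : 'I_n -> algC) (U z : algC) (v : 'rV[algC]_n) :
  (forall i j, 0 <= A i j) -> (forall i, 0 < w i) ->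
  (forall j, \sum_i w i * A i j <= U * w j) ->
  v *m A = z *: v -> v != 0 -> `|z| <= U.
Proof.
move=> HA Hw HU Hv Hv0.
have Hn : (0 < n)%N.
  case: n A w HA Hw HU v Hv Hv0 => // A w HA Hw HU v Hv Hv0.
  by case/negP: Hv0; apply/eqP/rowP => -[].
have Hs : enum 'I_n != [::].
  by rewrite -size_eq0 size_enum_ord -lt0n.
have Hr i : `|v 0 i| / w i \is Num.real.
  exact: ger0_real (divr_ge0 (normr_ge0 _) (ltW (Hw i))).
have [j _ Hj] := @seq_argmax _ (fun i => `|v 0 i| / w i) _ Hr Hs.
set mu := `|v 0 j| / w j.
have Hj' i : `|v 0 i| <= mu * w i.
  have := Hj i (mem_enum _ _); rewrite -/mu => H.
  by rewrite -ler_pdivrMr.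
have Hmu : 0 <= mu by exact: divr_ge0 (normr_ge0 _) (ltW (Hw j)).
have Hvj : 0 < `|v 0 j|.
  rewrite lt_neqAle normr_ge0 andbT eq_sym; apply/negP => /eqP H0.
  case/negP: Hv0; apply/eqP/rowP => i; rewrite mxE.
  apply/eqP; rewrite -normr_eq0 eq_le normr_ge0 andbT.
  by have := Hj' i; rewrite /mu H0 mul0r mul0r.
have key : `|z| * `|v 0 j| <= U * `|v 0 j|.
  have -> : `|z| * `|v 0 j| = `|(v *m A) 0 j| by rewrite Hv mxE normrM.
  rewrite mxE.
  apply: (le_trans (ler_norm_sum _ _ _)).
  apply: (@le_trans _ _ (\sum_i mu * (w i * A i j))).
    apply: ler_sum => i _; rewrite normrM (ger0_norm (HA i j)) mulrA.
    by apply: ler_wpM2r; [exact: HA|exact: Hj'].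
  rewrite -mulr_sumr.
  apply: (@le_trans _ _ (mu * (U * w j))); first by apply: ler_wpM2l; [exact: Hmu|exact: HU].
  have wj0 : w j != 0 by apply/lt0r_neq0/Hw.
  suff -> : mu * (U * w j) = U * `|v 0 j| by [].
  by rewrite /mu; field.
by rewrite -(ler_pM2r Hvj).
Qed.

Lemma sym_real_eig n (A : 'M[algC]_n) (z : algC) (v : 'rV[algC]_n) :
  (forall i j, A i j = A j i) -> (forall i j, A i j \is Num.real) ->
  v *m A = z *: v -> v != 0 -> z \is Num.real.
Proof.
move=> Hs Hr Hv Hv0.
pose S := \sum_j (v *m A) 0 j * (v 0 j)^*.
pose N := \sum_j v 0 j * (v 0 j)^*.
have HS : S = z * N.
  rewrite /S /N mulr_sumr; apply: eq_bigr => j _.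
  by rewrite Hv !mxE mulrA.
have HSr : S \is Num.real.
  apply/CrealP.
  rewrite /S rmorph_sum /=.
  under eq_bigr => j _ do rewrite mxE rmorphM /= rmorph_sum /= mulr_suml.
  under [RHS]eq_bigr => j _ do rewrite mxE mulr_suml.
  rewrite exchange_big /=; apply: eq_bigr => i _; apply: eq_bigr => j _.
  rewrite rmorphM /= conjCK (conj_Creal (Hr i j)) Hs.
  by ring.
have HN : 0 < N.
  rewrite /N lt_def; apply/andP; split; last first.
    by apply: sumr_ge0 => j _; rewrite -normCK exprn_ge0.
  apply/negP => H0.
  have H1 : forall i, true -> v 0 i * (v 0 i)^* = 0.
    apply/psumr_eq0P => [i _|]; first by rewrite -normCK exprn_ge0.
    exact/eqP.
  case/negP: Hv0; apply/eqP/rowP => j; rewrite mxE.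
  by move: (H1 j isT) => /eqP; rewrite -normCK expf_eq0 /= normr_eq0 => /eqP.
have -> : z = S / N by rewrite HS mulfK // lt0r_neq0.
by rewrite rpred_div // ger0_real // ltW.
Qed.

Lemma mem_eigen_seq n (A : 'M[algC]_n) z : (z \in eigen_seq A) = root (char_poly A) z.
Proof.
rewrite /eigen_seq; case: closed_field_poly_normal => rs /= Hrs.
rewrite [in RHS]Hrs (monicP (char_poly_monic A)) scale1r.
by rewrite root_prod_XsubC.
Qed.

Lemma sr_le n (A : 'M[algC]_n) U :
  0 <= U -> (forall z, root (char_poly A) z -> `|z| <= U) -> spectral_radius A <= U.
Proof.
move=> HU H; rewrite /spectral_radius big_seq.
apply: (big_ind (fun x => x <= U)) => //.
  by move=> x y Hx Hy; rewrite maxElt; case: ifP.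
by move=> z; rewrite mem_eigen_seq => /H.
Qed.

Lemma sr_ge n (A : 'M[algC]_n) z :
  root (char_poly A) z -> `|z| <= spectral_radius A.
Proof.
rewrite -mem_eigen_seq /spectral_radius; elim: (eigen_seq A) => [//|x s IH].
rewrite big_cons inE.
have Hr : \big[Num.max/0]_(j <- s) `|j| \is Num.real.
  by apply: bigmax_real => // i _; exact: normr_real.
move=> /orP[/eqP ->|/IH Hz]; case: (real_leP (normr_real x) Hr) => H //.
exact: le_trans Hz (ltW H).
Qed.

Lemma real_root_ge (g : {poly algC}) (L : algC) :
  g \is monic -> (forall z, root g z -> z \is Num.real) -> L \is Num.real ->
  g.[L] < 0 -> exists2 z, root g z & L <= z.
Proof.
move=> Hm Hr HL Hg.
case: (closed_field_poly_normal g) => rs Hrs.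
rewrite (monicP Hm) scale1r in Hrs.
have Hroot z : (z \in rs) = root g z by rewrite Hrs root_prod_XsubC.
case: (boolP (has (fun z => L <= z) rs)) => [/hasP[z Hz HLz]|/hasPn Hn].
  by exists z; rewrite -?Hroot.
exfalso.
have : 0 < g.[L].
  rewrite Hrs horner_prod big_seq; apply: prodr_gt0 => z Hz.
  rewrite hornerXsubC subr_gt0.
  have Hzr : z \is Num.real by apply: Hr; rewrite -Hroot.
  by case: (real_ltP Hzr HL) => // H; have := Hn z Hz; rewrite H.
by move=> H; have := lt_trans H Hg; rewrite ltxx.
Qed.

Lemma t_R0 (A B C K : rat) : 1 <= K -> 90*K + 2 <= A + B -> (B = A \/ B = A + 1) -> 1 <= C -> C <= 10*K ->
  ((A+B)/2 + 1/8) * B + 9/4 * C <= ((A+B)/2 + 1/8) * (9/8 * ((A+B)/2 + 1/8)).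
Proof. move=> hK hM hB h1 h2.
have hA : 45 * K <= A by case: hB => ?; subst; lra.
have hAA : 45 * A <= A * A by nra.
case: hB => ->; nra. Qed.
Lemma t_RB (A B C K : rat) : 1 <= K -> 90*K + 2 <= A + B -> (B = A \/ B = A + 1) -> 1 <= C -> C <= 10*K ->
  9/8 * ((A+B)/2 + 1/8) + B * (A - 1) <= ((A+B)/2 + 1/8) * ((A+B)/2 + 1/8).
Proof. move=> hK hM hB h1 h2.
have hA : 45 * K <= A by case: hB => ?; subst; lra.
case: hB => ?; subst B; lra. Qed.
Lemma t_RC (A B C K : rat) : 1 <= K -> 90*K + 2 <= A + B -> (B = A \/ B = A + 1) -> 1 <= C -> C <= 10*K ->
  9/8 * ((A+B)/2 + 1/8) + 9/4 * (C - 1) <= ((A+B)/2 + 1/8) * (9/4).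
Proof. move=> hK hM hB h1 h2.
have hA : 45 * K <= A by case: hB => ?; subst; lra.
case: hB => ?; subst B; lra. Qed.

Definition gq (A B C x : rat) := (x ^+ 2 - (A - 1) * B) * ((x + 1) * (x - C)) - B * (x * (x - (C - 1))).
Lemma t_L (A B C K : rat) : 1 <= K -> 90*K + 2 <= A + B -> (B = A \/ B = A + 1) -> 1 <= C -> C <= 10*K ->
  gq A B C ((A+B)/2 - 1/4) < 0.
Proof. move=> hK hM hB h1 h2; rewrite /gq; set x := (A+B)/2 - 1/4.
have hA : 45 * K <= A by case: hB => ?; subst; lra.
set D := x ^+ 2 - (A - 1) * B.
set Q := (x + 1) * (x - C).
set R := x * (x - (C - 1)).
have hD : 0 < D /\ D < B.
  have hA1 : 45 <= A by lra.
  case: hB => ?; subst B.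
    have -> : D = A / 2 + 1 / 16 by rewrite /D /x; field.
    split; lra.
  have -> : D = A / 2 + 17 / 16 by rewrite /D /x; field.
  split; lra.
have hx : 30 * K <= x - C by rewrite /x; case: hB => ?; subst B; lra.
have hQ : 0 < Q by rewrite /Q; apply: mulr_gt0; lra.
have hRQ : Q < R.
  have -> : R = Q + C by rewrite /R /Q; ring.
  lra.
case: hD => hD1 hD2.
have : 0 < (B - D) * R + D * (R - Q).
  have h3 : 0 < (B - D) * R by apply: mulr_gt0; lra.
  have h4 : 0 < D * (R - Q) by apply: mulr_gt0; lra.
  lra.
move=> H. have -> : D * Q - B * R = - ((B - D) * R + D * (R - Q)) by ring.
lra.
Qed.
Lemma t_N0 (A B C : rat) : 2 <= A -> 1 <= B -> 1 <= C ->
  gq A B C 0 != 0.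
Proof. move=> hA hB hC.
have -> : gq A B C 0 = (A - 1) * B * C by rewrite /gq; ring.
by rewrite lt0r_neq0 // !mulr_gt0 //; lra. Qed.
Lemma t_Nc (A B C K : rat) : 1 <= K -> 90*K + 2 <= A + B -> (B = A \/ B = A + 1) -> 1 <= C -> C <= 10*K ->
  gq A B C (C - 1) != 0.
Proof. move=> hK hM hB h1 h2; set x := C - 1.
have hA : 45 * K <= A by case: hB => ?; subst; lra.
have hP : x ^+ 2 < (A - 1) * B.
  have hx0 : 0 <= x by rewrite /x; lra.
  have hxA : x < A - 1 by rewrite /x; lra.
  have hxB : x < B by rewrite /x; case: hB => ?; subst; lra.
  rewrite expr2.
  have h5 : x * x <= x * B by nra.
  have hB0 : 0 < B by case: hB => ?; subst; lra.
  have h6 : x * B < (A - 1) * B by rewrite (ltr_pM2r hB0); lra.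
  exact: le_lt_trans h5 h6.
have -> : gq A B C x = C * ((A - 1) * B - x ^+ 2) by rewrite /gq /x; ring.
apply: lt0r_neq0; apply: mulr_gt0; [lra | by rewrite subr_gt0].
Qed.

Lemma monic_sub (p q : {poly algC}) : p \is monic -> (size q < size p)%N -> p - q \is monic.
Proof. by move=> Hp Hs; rewrite monicE lead_coefDl ?size_opp // (monicP Hp). Qed.

Definition gpoly (A B C : algC) : {poly algC} :=
  ('X^2 - ((A - 1) * B)%:P) * (('X + 1%:P) * ('X - C%:P))
  - B%:P * ('X * ('X - (C - 1)%:P)).

Lemma gpoly_monic A B C : gpoly A B C \is monic.
Proof.
rewrite /gpoly; apply: monic_sub.
  by rewrite !rpredM ?monicXnsubC ?monicXaddC ?monicXsubC.
have H1 : size (('X^2 - ((A - 1) * B)%:P) * (('X + 1%:P) * ('X - C%:P))) = 5%N.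
  rewrite size_monicM ?monicXnsubC ?size_XnsubC //; last first.
    by rewrite monic_neq0 // rpredM ?monicXaddC ?monicXsubC.
  rewrite size_monicM ?monicXaddC ?size_XaddC ?size_XsubC //.
  by rewrite monic_neq0 // monicXsubC.
have H2 : size ('X * ('X - (C - 1)%:P)) = 3%N.
  rewrite size_monicM ?monicX ?size_polyX ?size_XsubC //.
  by rewrite monic_neq0 // monicXsubC.
rewrite H1; apply: (leq_ltn_trans (size_polyMleq _ _)).
rewrite H2 !addnS /= addn0 !ltnS.
exact: leq_trans (size_polyC_leq1 B) _.
Qed.

Lemma gpoly_horner A B C x :
  (gpoly A B C).[x] = (x ^+ 2 - (A - 1) * B) * ((x + 1) * (x - C)) - B * (x * (x - (C - 1))).
Proof. by rewrite /gpoly !hornerE. Qed.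

Lemma eq_via (x y d G : algC) : d != 0 -> (x - y) * d = G -> G = 0 -> x = y.
Proof.
move=> Hd H HG; apply/eqP; rewrite -subr_eq0; apply/eqP.
by apply: (mulIf Hd); rewrite H HG mul0r.
Qed.

Lemma gpoly_eig n t z :
  (3 <= t)%N -> (t <= n)%N -> (4 <= n - t + 2)%N ->
  root (gpoly ((n - t + 2) %/ 2)%:R ((n - t + 2) - (n - t + 2) %/ 2)%:R (n - (n - t + 2))%:R) z ->
  z != 0 -> z != (n - (n - t + 2))%:R - 1 ->
  exists2 v : 'rV_n, v *m tk_adjmx n t = z *: v & v != 0.
Proof.
move=> Ht Htn Hm.
set m := (n - t + 2)%N; set a := (m %/ 2)%N; set b := (m - a)%N; set c := (n - m)%N.
set A : algC := a%:R; set B : algC := b%:R; set C : algC := c%:R.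
move=> /rootP Hg Hz0 Hz1.
have Hz1' : z - C + 1 != 0.
  apply: contra Hz1 => /eqP H; rewrite -subr_eq0.
  have -> : z - (C - 1) = z - C + 1 by ring.
  by rewrite H.
have Hz1'' : z - c%:R + 1 != 0 := Hz1'.
pose x0 := z - (A - 1) * B / z.
pose xa := B / z.
pose xc := x0 / (z - C + 1).
exists (\row_(i < n) Fv n t x0 xa 1 xc i).
  apply/rowP => j; rewrite !mxE.
  under eq_bigr => i _ do rewrite tk_adjE mxE.
  rewrite row_sum // /RS /Fv /= -/m -/a -/b -/c.
  have Ha1 : (a - 1)%:R = A - 1 :> algC by rewrite natrB //; rewrite /a; lia.
  have Hc1 : (c - 1)%:R = C - 1 :> algC by rewrite natrB //; rewrite /c; lia.
  case: eqP => _; [| case: ifP => _; [| case: ifP => _]].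
  - rewrite -[_ *+ b]mulr_natr -[_ *+ c]mulr_natr -/B -/C.
    apply: (@eq_via _ _ (z * (z - C + 1)) (- (gpoly A B C).[z])).
    + by rewrite mulf_neq0.
    + by rewrite gpoly_horner /xc /x0; field; rewrite ?Hz0 ?Hz1''.
    + by rewrite Hg oppr0.
  - by rewrite -[_ *+ b]mulr_natr -/B /xa; field; rewrite ?Hz0 ?Hz1''.
  - by rewrite -[_ *+ (a - 1)]mulr_natr Ha1 /x0 /xa; field; rewrite ?Hz0 ?Hz1''.
  - by rewrite -[_ *+ (c - 1)]mulr_natr Hc1 /xc /x0; field; rewrite ?Hz0 ?Hz1''.
have Han : (a < n)%N by rewrite /a /m; lia.
apply/eqP => /rowP /(_ (Ordinal Han)); rewrite !mxE /Fv /= -/m -/a.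
have -> : (a == 0)%N = false by apply/negbTE; rewrite /a /m; lia.
rewrite ltnn.
have -> : (a < m)%N = true by apply/idP; rewrite /a /m; lia.
by move/eqP; rewrite oner_eq0.
Qed.

Lemma rat_facts (k a b c : nat) : (1 <= k)%N -> (90 * k + 2 <= a + b)%N -> (b = a \/ b = a.+1) ->
  (1 <= c)%N -> (c <= 10 * k)%N ->
  [/\ 1 <= (k%:R : rat), 90 * k%:R + 2 <= (a%:R + b%:R : rat),
      (b%:R = a%:R :> rat \/ b%:R = a%:R + 1 :> rat), 1 <= (c%:R : rat) & (c%:R : rat) <= 10 * k%:R].
Proof.
move=> hk hm hb hc1 hc2; split.
- by rewrite ler1n.
- have : ((90 * k + 2)%:R <= (a + b)%:R :> rat) by rewrite ler_nat.
  by rewrite natrD natrM natrD.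
- by case: hb => ->; [left|right; rewrite -addn1 natrD].
- by rewrite ler1n.
- have : (c%:R <= (10 * k)%:R :> rat) by rewrite ler_nat.
  by rewrite natrM.
Qed.

Lemma upper k n t : (1 <= k)%N -> (100 * k <= n)%N -> (3 <= t)%N -> (t <= 10 * k)%N ->
  forall z, root (char_poly (tk_adjmx n t)) z ->
  `|z| <= ratr ((((n - t + 2) %/ 2)%:R + ((n - t + 2) - (n - t + 2) %/ 2)%:R) / 2 + 1 / 8).
Proof.
move=> hk hn ht htk z; rewrite -eigenvalue_root_char => /eigenvalueP [v Hv Hv0].
set m := (n - t + 2)%N; set a := (m %/ 2)%N; set b := (m - a)%N; set c := (n - m)%N.
have [hK hM hB h1 h2] : [/\ 1 <= (k%:R : rat), 90 * k%:R + 2 <= (a%:R + b%:R : rat),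
      (b%:R = a%:R :> rat \/ b%:R = a%:R + 1 :> rat), 1 <= (c%:R : rat) & (c%:R : rat) <= 10 * k%:R].
  apply: rat_facts => //; rewrite /b /a /c /m; lia.
have hA : 45 * k%:R <= (a%:R : rat) by case: hB => hB; rewrite hB in hM; lra.
have Ha1 : (a - 1)%:R = a%:R - 1 :> rat.
  have h : (1 <= a)%N by rewrite /a /m; lia.
  by rewrite (natrB _ h).
have Hc1 : (c - 1)%:R = c%:R - 1 :> rat.
  have h : (1 <= c)%N by rewrite /c /m; lia.
  by rewrite (natrB _ h).
apply: (@collatz n (tk_adjmx n t) (fun i => Fv n t
   (ratr (9/8 * ((a%:R + b%:R)/2 + 1/8))) (ratr b%:R) (ratr ((a%:R + b%:R)/2 + 1/8)) (ratr (9/4)) i)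
   _ z v _ _ _ Hv Hv0).
- by move=> i j; rewrite tk_adjE ler0n.
- move=> i; rewrite /Fv; case: ifP => _; [|case: ifP => _; [|case: ifP => _]]; rewrite ltr0q.
  + case: hB => hB; lra.
  + case: hB => hB; lra.
  + case: hB => hB; lra.
  + lra.
- move=> j; under eq_bigr => i _ do rewrite tk_adjE.
  have Htn : (t <= n)%N by lia.
  have Hm4 : (4 <= n - t + 2)%N by lia.
  rewrite (row_sum _ _ _ _ _ _ _ ht Htn Hm4 (ltn_ord j)).
  rewrite /RS /Fv /= -/m -/a -/b -/c.
  case: eqP => _; [|case: ifP => _; [|case: ifP => _]];
    rewrite -!(rmorphMn (@ratr algC)) -?(rmorphD (@ratr algC)) -(rmorphM (@ratr algC)) ler_rat.
  + rewrite -[_ *+ b]mulr_natr -[_ *+ c]mulr_natr.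
    have := @t_R0 _ _ _ _ hK hM hB h1 h2; lra.
  + rewrite -[_ *+ b]mulr_natr; lra.
  + rewrite -[_ *+ (a - 1)]mulr_natr Ha1.
    have := @t_RB _ _ _ _ hK hM hB h1 h2; lra.
  + rewrite -[_ *+ (c - 1)]mulr_natr Hc1.
    have := @t_RC _ _ _ _ hK hM hB h1 h2; lra.
Qed.

Lemma adjN_sym n t i j : adjN n t i j = adjN n t j i.
Proof.
rewrite /adjN /= (eq_sym j i).
by case: (i < n - t + 2)%N; case: (j < n - t + 2)%N; case: (i < (n-t+2)%/2)%N;
  case: (j < (n-t+2)%/2)%N; case: (i == 0)%N; case: (j == 0)%N;
  case: (n - t + 2 <= i)%N; case: (n-t+2 <= j)%N; case: (i == j).
Qed.

Lemma gpoly_ratr (A B C x : rat) :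
  (gpoly (ratr A) (ratr B) (ratr C)).[ratr x] = ratr (gq A B C x).
Proof.
by rewrite gpoly_horner /gq !(rmorphB, rmorphM, rmorphD, rmorphXn, rmorph1).
Qed.

Lemma lower k n t : (1 <= k)%N -> (100 * k <= n)%N -> (3 <= t)%N -> (t <= 10 * k)%N ->
  exists2 z, root (char_poly (tk_adjmx n t)) z &
  ratr ((((n - t + 2) %/ 2)%:R + ((n - t + 2) - (n - t + 2) %/ 2)%:R) / 2 - 1 / 4) <= `|z|.
Proof.
move=> hk hn ht htk.
have Htn : (t <= n)%N by lia.
have Hm4 : (4 <= n - t + 2)%N by lia.
have Heig z := @gpoly_eig n t z ht Htn Hm4.
set m := (n - t + 2)%N; set a := (m %/ 2)%N; set b := (m - a)%N; set c := (n - m)%N.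
rewrite -/m -/a -/b -/c in Heig.
have [hK hM hB h1 h2] : [/\ 1 <= (k%:R : rat), 90 * k%:R + 2 <= (a%:R + b%:R : rat),
      (b%:R = a%:R :> rat \/ b%:R = a%:R + 1 :> rat), 1 <= (c%:R : rat) & (c%:R : rat) <= 10 * k%:R].
  apply: rat_facts => //; rewrite /b /a /c /m; lia.
have hA : 45 * k%:R <= (a%:R : rat) by case: hB => hB; rewrite hB in hM; lra.
have hA2 : 2 <= (a%:R : rat) by lra.
have hB1 : 1 <= (b%:R : rat) by case: hB => hB; rewrite hB; lra.
have Eg : gpoly a%:R b%:R c%:R = gpoly (ratr a%:R) (ratr b%:R) (ratr c%:R) by rewrite !ratr_nat.
have Hne z : root (gpoly a%:R b%:R c%:R) z -> (z != 0) && (z != c%:R - 1).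
  move=> /rootP Hz; apply/andP; split; apply/eqP => E.
    move: Hz; rewrite E Eg -(rmorph0 (@ratr algC)) gpoly_ratr => /eqP.
    by rewrite (fmorph_eq (@ratr algC)); apply/negP; apply: t_N0.
  move: Hz; rewrite E Eg -(ratr_nat algC c) -(rmorph1 (@ratr algC)) -(rmorphB (@ratr algC)).
  rewrite gpoly_ratr => /eqP; rewrite (fmorph_eq0 (@ratr algC)); apply/negP.
  exact: (@t_Nc _ _ _ _ hK hM hB h1 h2).
have Hreal z : root (gpoly a%:R b%:R c%:R) z -> z \is Num.real.
  move=> Hz; have /andP[Hz0 Hz1] := Hne z Hz.
  have [v Hv Hv0] := Heig z Hz Hz0 Hz1.
  apply: (@sym_real_eig n (tk_adjmx n t) z v _ _ Hv Hv0).
    by move=> i j; rewrite !tk_adjE adjN_sym.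
  by move=> i j; rewrite tk_adjE realn.
have HL : 0 < ((a%:R + b%:R) / 2 - 1 / 4 : rat) by lra.
have [z Hz HLz] : exists2 z, root (gpoly a%:R b%:R c%:R) z &
    ratr ((a%:R + b%:R) / 2 - 1 / 4) <= z.
  apply: real_root_ge.
  - exact: gpoly_monic.
  - exact: Hreal.
  - by apply: ger0_real; rewrite ler0q ltW.
  - rewrite Eg gpoly_ratr ltrq0.
    exact: (@t_L _ _ _ _ hK hM hB h1 h2).
exists z.
  have /andP[Hz0 Hz1] := Hne z Hz.
  have [v Hv Hv0] := Heig z Hz Hz0 Hz1.
  by rewrite -eigenvalue_root_char; apply/eigenvalueP; exists v.
have Hz0 : 0 <= z by apply: le_trans HLz; rewrite ler0q ltW.
by rewrite ger0_norm.
Qed.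

Theorem lemma2p8 (k n r s : nat) :
  (1 <= k)%N -> (100 * k <= n)%N -> (3 <= r)%N -> (r < s)%N -> (s <= 10 * k)%N ->
  spectral_radius (tk_adjmx n s) < spectral_radius (tk_adjmx n r).
Proof.
move=> hk hn hr hrs hs.
have hr' : (r <= 10 * k)%N by lia.
have hs3 : (3 <= s)%N by lia.
have [z Hz HL] := @lower k n r hk hn hr hr'.
have HU := @upper k n s hk hn hs3 hs.
have E1 : (((n - s + 2) %/ 2)%:R + ((n - s + 2) - (n - s + 2) %/ 2)%:R : rat) = (n - s + 2)%:R.
  by rewrite -natrD; congr (_%:R); lia.
have E2 : (((n - r + 2) %/ 2)%:R + ((n - r + 2) - (n - r + 2) %/ 2)%:R : rat) = (n - r + 2)%:R.
  by rewrite -natrD; congr (_%:R); lia.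
rewrite E1 in HU; rewrite E2 in HL.
have H12 : ((n - s + 2)%:R + 1 <= (n - r + 2)%:R :> rat).
  by rewrite natr1 ler_nat; lia.
apply: (le_lt_trans (@sr_le _ _ _ _ HU)); first by rewrite ler0q; have := ler0n rat (n - s + 2); lra.
apply: (lt_le_trans _ (le_trans HL (@sr_ge _ _ _ Hz))).
rewrite ltr_rat; lra.
Qed.
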